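(* Consider a tiling of the sphere by $f>12$ angle congruent pentagons in which at most three distinct angle values occur at degree $3$ vertices. Then, after relabeling the distinct angle values, the complete set $S$ of angle combinations at degree $3$ vertices and the pentagon $P$ (multiset of the five angles of a tile) form one of the following pairs: - $S=\{\alpha^3\}$: $P=\alpha^4\beta$; - $S=\{\alpha\beta^2\}$: $P=\alpha^2\beta^3$ or $\alpha^3\beta^2$, or $P=\alpha^2\beta^2\gamma$; - $S=\{\alpha\beta\gamma,\alpha^3\}$: $P=\alpha^3\beta\gamma$ or $\alpha^2\beta^2\gamma$, or $P=\alpha^2\beta\gamma\delta$; - $S=\{\alpha\beta^2,\alpha^2\gamma\}$: $P=\alpha^3\beta\gamma$, $\alpha^2\beta^2\gamma$ or $\alpha^2\beta\gamma^2$, or $P=\alpha^2\beta\gamma\delta$; - $S=\{\alpha\beta^2,\gamma^3\}$: $P=\alpha^2\beta^2\gamma$, $\alpha^2\beta\gamma^2$, $\alpha\beta^3\gamma$, $\alpha\beta^2\gamma^2$ or $\alpha\beta\gamma^3$, or $P=\alpha\beta^2\gamma\delta$ or $\alpha\beta\gamma^2\delta$. In each case, the angle values named are pairwise distinct, and in the listed pentagons the last angle letter not occurring in $S$ (namely $\beta$ in the first case, $\gamma$ in $\alpha^2\beta^2\gamma$ of the second case, and $\delta$ in the others) denotes an angle value that appears at no degree $3$ vertex; all other letters are exactly the values occurring in $S$.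
   Context: A spherical tiling by angle congruent pentagons is a graph embedded in the sphere whose faces (tiles) are all pentagons, edge-to-edge with every vertex of degree at least $3$; each corner carries a positive real angle, the angles at each vertex sum to $2\pi$, and every tile has the same multiset of five angles. Multiplicative notation is used for multisets: e.g. $\alpha\beta^2$ is a degree $3$ vertex with corner angles $\alpha,\beta,\beta$, and $\alpha^2\beta\gamma\delta$ is a pentagon with angles $\alpha,\alpha,\beta,\gamma,\delta$. $f$ is the number of tiles. *)

(* Defs.v *)
From Stdlib Require Import Reals List Permutation.
From HB Require Import structures.
From mathcomp Require Import all_boot all_fingroup.
Set Implicit Arguments. Unset Strict Implicit. Unset Printing Implicit Defensive.

(* A spherical tiling is encoded as a (connected, oriented) combinatorial map
   on a finite set D of darts:
   - s : rotation of darts around their vertex; vertices = orbits of s;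
   - a : the edge involution (fixed-point free); edges = orbits of a;
   - face_perm s a = (x |-> s (a x)); tiles (faces) = orbits of face_perm.
   Each dart x corresponds bijectively to a corner: the corner of the tile
   (face orbit of x) at the vertex (s-orbit of x).  ang x is the angle there. *)

Definition face_perm (D : finType) (s a : {perm D}) : {perm D} := (a * s)%g.

Definition vertices (D : finType) (s a : {perm D}) : {set {set D}} := porbits s.
Definition edges (D : finType) (s a : {perm D}) : {set {set D}} := porbits a.
Definition tiles (D : finType) (s a : {perm D}) : {set {set D}} :=
  porbits (face_perm s a).

Definition ntiles (D : finType) (s a : {perm D}) : nat := #|tiles s a|.

Definition angles (D : finType) (ang : D -> R) (X : {set D}) : list R :=
  map ang (enum X).

Definition deg3 (D : finType) (s a : {perm D}) (V : {set D}) : bool :=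
  (V \in vertices s a) && (#|V| == 3).

Definition tile_angles (D : finType) (s a : {perm D}) (ang : D -> R)
  (P : list R) : Prop :=
  forall F, F \in tiles s a -> Permutation P (angles ang F).

Definition deg3_vertex_types (D : finType) (s a : {perm D}) (ang : D -> R)
  (S : list (list R)) : Prop :=
  (forall V, deg3 s a V -> exists c, List.In c S /\ Permutation c (angles ang V)) /\
  (forall c, List.In c S -> exists V, deg3 s a V /\ Permutation c (angles ang V)).

Record angle_congruent_pentagonal_tiling (D : finType) (s a : {perm D})
    (ang : D -> R) : Prop := {
  edge_involutive : forall x, a (a x) = x;
  edge_no_fixpoint : forall x, a x != x;
  map_connected : forall x y, connect (fun u v => (v == s u) || (v == a u)) x y;
  (* Euler characteristic 2: with connectedness, the surface is the sphere *)
  euler_sphere : #|vertices s a| + #|tiles s a| = #|edges s a| + 2;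
  vertex_degree : forall V, V \in vertices s a -> 3 <= #|V|;
  tiles_pentagons : forall F, F \in tiles s a -> #|F| = 5;
  (* each tile is a (simple) pentagon: its 5 corners are at 5 distinct vertices *)
  tiles_simple : forall F V, F \in tiles s a -> V \in vertices s a ->
                   #|F :&: V| <= 1;
  angle_pos : forall x, Rlt R0 (ang x);
  vertex_angle_sum : forall V, V \in vertices s a ->
                   \big[Rplus/R0]_(x in V) ang x = Rmult 2 PI;
  angle_congruent : exists P : list R, tile_angles s a ang P
}.

(* Main.v *)
Require Import Defs.
From Stdlib Require Import Reals List Permutation.
From HB Require Import structures.
From mathcomp Require Import all_boot all_fingroup.
From Stdlib Require Import Lia Lra Classical.
From mathcomp Require Import zify.
Set Implicit Arguments. Unset Strict Implicit.
Delimit Scope R_scope with Re.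

Lemma sum_porbits (T : finType) (s : {perm T}) (g : T -> nat) :
  \sum_(x : T) g x = \sum_(A in porbits s) \sum_(x in A) g x.
Proof.
rewrite (partition_big (porbit s) (fun A => A \in porbits s)); last first.
  by move=> x _; apply: imset_f.
apply: eq_bigr => A /imsetP[y _ ->].
apply: eq_bigl => x /=; by rewrite eq_porbit_mem.
Qed.

Lemma card_porbits_sum (T : finType) (s : {perm T}) :
  #|T| = \sum_(A in porbits s) #|A|.
Proof.
rewrite -sum1_card (sum_porbits s (fun _ => 1)).
apply: eq_bigr => A _; by rewrite sum1_card.
Qed.

Lemma invol_iter (T : finType) (a : {perm T}) (x : T) i :
  (forall y, a (a y) = y) -> iter i a x = x \/ iter i a x = a x.
Proof.
move=> H; elim: i => [|i IH] /=; first by left.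
case: IH => ->; [right | left]; by rewrite ?H.
Qed.

Lemma porbit_invol (T : finType) (a : {perm T}) (x : T) :
  (forall y, a (a y) = y) -> porbit a x = [set x; a x].
Proof.
move=> H; apply/setP => y; rewrite !inE; apply/porbitP/idP.
  case=> i ->; rewrite permX; case: (invol_iter x i H) => ->; by rewrite eqxx ?orbT.
case/orP => /eqP ->; [exists 0 | exists 1]; by rewrite ?expg0 ?perm1 ?expg1.
Qed.

Definition wsum (w : R -> nat) (L : list R) : nat := sumn (map w L).

Lemma wsum_perm w L M : Permutation L M -> wsum w L = wsum w M.
Proof.
rewrite /wsum; elim => //= [x l l' _ -> | x y l | l l' l'' _ -> _ ->] //.
by rewrite addnCA.
Qed.

Lemma big_seq_sumn (T : Type) (g : T -> nat) (l : seq T) :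
  \sum_(x <- l) g x = sumn (map g l).
Proof. elim: l => [|x l IH]; by rewrite ?big_nil ?big_cons ?IH. Qed.

Lemma sum_set_wsum (D : finType) (ang : D -> R) (w : R -> nat) (X : {set D}) :
  \sum_(x in X) w (ang x) = wsum w (angles ang X).
Proof.
by rewrite -big_enum big_seq_sumn /wsum /angles -map_comp.
Qed.

Section Tiling.
Variables (D : finType) (s a : {perm D}) (ang : D -> R).
Hypothesis T : angle_congruent_pentagonal_tiling s a ang.

Definition v3 := \sum_(V in vertices s a) ((#|V| == 3) : nat).

Lemma cardD_tiles : #|D| = 5 * ntiles s a.
Proof.
rewrite (card_porbits_sum (face_perm s a)) /ntiles /tiles mulnC -sum_nat_const.
apply: eq_bigr => F HF; rewrite (tiles_pentagons T HF); by [].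
Qed.

Lemma cardD_edges : #|D| = 2 * #|edges s a|.
Proof.
rewrite (card_porbits_sum a) /edges mulnC -sum_nat_const.
apply: eq_bigr => A /imsetP[x _ ->].
rewrite porbit_invol; last exact: (edge_involutive T).
rewrite cards2 eq_sym (negbTE (edge_no_fixpoint T x)); by [].
Qed.

Lemma v3_bound : ntiles s a + 8 <= v3.
Proof.
have E := euler_sphere T.
have H1 := cardD_tiles. have H2 := cardD_edges.
have H3 : #|D| = \sum_(V in vertices s a) #|V| by exact: card_porbits_sum.
have H4 : 4 * #|vertices s a| <= \sum_(V in vertices s a) (#|V| + ((#|V| == 3) : nat)).
  rewrite mulnC -sum_nat_const; apply: leq_sum => V HV.
  have Hd := vertex_degree T HV.
  case: (boolP (#|V| == 3)) => H; first by rewrite (eqP H).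
  rewrite /= addn0 ltn_neqAle Hd andbT eq_sym; exact: H.
rewrite big_split /= -H3 in H4.
rewrite -/v3 in H4; rewrite /ntiles in H1 *; rewrite H1 in H2 H4. have E2 : #|vertices s a| + #|tiles s a| = #|edges s a| + 2 := E. clear E. move: E2 H4 H2; move: #|vertices s a| #|tiles s a| #|edges s a| v3 => x y z w. lia.
Qed.

Variable P : list R.
Hypothesis HP : tile_angles s a ang P.

Lemma key_lemma (w : R -> nat) (K : nat) :
  0 < K -> (forall V, deg3 s a V -> K <= wsum w (angles ang V)) ->
  K < wsum w P.
Proof.
move=> K0 HV.
have Hup : \sum_(x : D) w (ang x) = ntiles s a * wsum w P.
  rewrite (sum_porbits (face_perm s a)) /ntiles /tiles -sum_nat_const.
  apply: eq_bigr => F HF; rewrite sum_set_wsum.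
  symmetry; apply: wsum_perm; exact: HP.
have Hlo : K * v3 <= \sum_(x : D) w (ang x).
  rewrite (sum_porbits s) /v3 big_distrr /=; apply: leq_sum => V HV'.
  case: eqP => [H3|]; last by rewrite muln0.
  rewrite muln1 sum_set_wsum; apply: HV; by rewrite /deg3 HV' H3 eqxx.
have := v3_bound.
rewrite Hup in Hlo.
move: Hlo; set W := wsum w P; set f := ntiles s a; set v := v3.
move=> Hlo Hb.
rewrite ltnNge; apply/negP => HW.
have : K * (f + 8) <= f * K.
  apply: leq_trans (leq_mul (leqnn K) Hb) _.
  apply: leq_trans Hlo _; by rewrite leq_mul2l HW orbT.
rewrite mulnDr mulnC; lia.
Qed.


Lemma in_map_In (X : eqType) (f : X -> R) (l : seq X) x :
  x \in l -> List.In (f x) (map f l).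
Proof.
elim: l => [|y l IH] //=; rewrite inE => /orP[/eqP ->|H]; [left|right; apply: IH] => //.
Qed.

Lemma In_P x : List.In (ang x) P.
Proof.
have HF : porbit (face_perm s a) x \in tiles s a by apply: imset_f.
apply: (Permutation_in _ (Permutation_sym (HP HF))).
apply: in_map_In; by rewrite mem_enum porbit_id.
Qed.

Lemma bigR_enum (X : {set D}) (g : D -> R) :
  \big[Rplus/R0]_(x in X) g x = \big[Rplus/R0]_(x <- enum X) g x.
Proof. by rewrite -big_filter deprecated_filter_index_enum. Qed.

Lemma deg3_triple V : deg3 s a V ->
  exists x1 x2 x3, enum V = [:: x1; x2; x3] /\ x1 \in V /\ x2 \in V /\ x3 \in V /\
    angles ang V = [:: ang x1; ang x2; ang x3] /\
    (ang x1 + ang x2 + ang x3 = 2 * PI)%Re.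
Proof.
case/andP => HV /eqP H3.
have Hs := vertex_angle_sum T HV.
rewrite bigR_enum in Hs.
have Hm : forall x, x \in enum V -> x \in V by move=> x; rewrite mem_enum.
rewrite cardE in H3; rewrite /angles.
move: Hm Hs H3; case: (enum V) => [|x1 [|x2 [|x3 [|x4 l]]]] //= Hm Hs _.
exists x1, x2, x3; split => //.
rewrite !Hm ?inE ?eqxx ?orbT //; split => //; split => //; split => //; split => //.
rewrite !big_cons big_nil in Hs. rewrite -Hs. ring.
Qed.

Lemma iter_Rplus (n : nat) c : iter n (Rplus c) R0 = (INR n * c)%Re.
Proof.
elim: n => [|n IH] /=; first ring.
rewrite IH; case: n {IH} => [|n] /=; ring.
Qed.

Lemma all_twothirds : (forall x, ang x = 2 * PI / 3)%Re -> ntiles s a = 12.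
Proof.
move=> Hx.
have Hd : forall V, V \in vertices s a -> #|V| = 3.
  move=> V HV; have Hs := vertex_angle_sum T HV.
  rewrite (eq_bigr (fun _ => 2 * PI / 3)%Re) in Hs; last by move=> x _; exact: Hx.
  rewrite big_const iter_Rplus in Hs.
  have HPI := PI_RGT_0.
  have : INR #|V| = INR 3.
    apply: (Rmult_eq_reg_r (2 * PI / 3)%Re); first by rewrite Hs /=; field.
    apply: Rgt_not_eq; apply: Rdiv_lt_0_compat; [apply: Rmult_lt_0_compat|] => //.
    - by apply: Rlt_0_2.
    - by apply: (IZR_lt 0 3).
  by move/INR_eq.
have E := euler_sphere T.
have H1 := cardD_tiles. have H2 := cardD_edges.
have H3 : #|D| = \sum_(V in vertices s a) #|V| by exact: card_porbits_sum.
rewrite (eq_bigr (fun _ => 3)) in H3; last by move=> V HV; exact: Hd.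
rewrite sum_nat_const in H3.
rewrite H1 in H2 H3; rewrite /ntiles in H2 H3 *.
have E2 : #|vertices s a| + #|tiles s a| = #|edges s a| + 2 := E. clear E.
move: E2 H2 H3; move: #|vertices s a| #|tiles s a| #|edges s a| => x y z. lia.
Qed.

End Tiling.

Definition ind (v : R) (y : R) : nat := if Req_dec_T y v then 1 else 0.
Definition cnt (L : list R) (v : R) := wsum (ind v) L.

Lemma wsum_cons w y L : wsum w (y :: L) = w y + wsum w L.
Proof. by []. Qed.
Lemma wsum_nil w : wsum w [::] = 0.
Proof. by []. Qed.
Lemma wsum_app w L M : wsum w (L ++ M) = wsum w L + wsum w M.
Proof. by rewrite /wsum map_cat sumn_cat. Qed.
Lemma wsum_nseq w n y : wsum w (nseq n y) = n * w y.
Proof. elim: n => [|n IH] //=; rewrite wsum_cons IH mulSn. by []. Qed.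
Lemma wsum_add w1 w2 L : wsum (fun y => w1 y + w2 y) L = wsum w1 L + wsum w2 L.
Proof. elim: L => [|y L IH] //=; rewrite !wsum_cons IH; lia. Qed.
Lemma wsum_mul k w L : wsum (fun y => k * w y) L = k * wsum w L.
Proof. elim: L => [|y L IH] //=; rewrite ?muln0 // !wsum_cons IH; lia. Qed.
Lemma wsum_le_size w L : (forall y, w y <= 1) -> wsum w L <= size L.
Proof. move=> H; elim: L => [|y L IH] //=; rewrite wsum_cons; have := H y; lia. Qed.
Lemma wsum_In w L y : List.In y L -> w y <= wsum w L.
Proof.
elim: L => [|z L IH] //= [->|H]; rewrite wsum_cons; first lia.
have := IH H; lia.
Qed.
Lemma wsum_all1 w L : (forall y, List.In y L -> w y = 1) -> wsum w L = size L.
Proof.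
elim: L => [|y L IH] //= H; rewrite wsum_cons H; last by left.
rewrite IH // => z Hz; apply: H; by right.
Qed.
Lemma ind_eq v : ind v v = 1.
Proof. rewrite /ind; case: Req_dec_T => //. Qed.
Lemma ind_neq v y : y <> v -> ind v y = 0.
Proof. rewrite /ind; case: Req_dec_T => //. Qed.
Lemma ind_le1 v y : ind v y <= 1.
Proof. rewrite /ind; case: Req_dec_T => //. Qed.
Lemma count_occ_cnt L v : count_occ Req_dec_T L v = cnt L v.
Proof.
elim: L => [|y L IH] //=; rewrite /cnt wsum_cons -/(cnt L v) -IH /ind.
case: Req_dec_T => //.
Qed.
Lemma perm_cnt L M : (forall y, cnt L y = cnt M y) -> Permutation L M.
Proof.
move=> H; apply/(Permutation_count_occ Req_dec_T) => y; by rewrite !count_occ_cnt.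
Qed.
Lemma size_length (L : list R) : size L = length L.
Proof. by elim: L => //= y L ->. Qed.
Lemma cnt_In L v : List.In v L -> 1 <= cnt L v.
Proof. move=> H; have := wsum_In (ind v) H; by rewrite ind_eq. Qed.

Lemma cnt_nil y : cnt [::] y = 0. Proof. by []. Qed.
Lemma cnt_single d y : cnt [:: d] y = ind y d. Proof. by rewrite /cnt wsum_cons wsum_nil addn0. Qed.
Fixpoint sumcnt (vs : list R) (L : list R) : nat :=
  match vs with nil => 0 | v :: vs => cnt L v + sumcnt vs L end.
Fixpoint sumind (vs : list R) (z : R) : nat :=
  match vs with nil => 0 | v :: vs => ind v z + sumind vs z end.
Lemma sumind_notin vs z : ~ List.In z vs -> sumind vs z = 0.
Proof.
elim: vs => [|v vs IH] //= H; rewrite IH ?ind_neq //; auto.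
Qed.
Lemma sumind_le1 vs z : NoDup vs -> sumind vs z <= 1.
Proof.
elim: vs => [|v vs IH] //= H; inversion H; subst.
case: (Req_dec_T z v) => [->|Hzv]; first by rewrite ind_eq sumind_notin.
rewrite ind_neq //; exact: IH.
Qed.
Lemma sumcnt_le vs L : NoDup vs -> sumcnt vs L <= size L.
Proof.
move=> H; have -> : sumcnt vs L = wsum (sumind vs) L.
  elim: vs {H} => [|v vs IH] /=; first by elim: L.
  by rewrite IH /cnt -wsum_add.
apply: wsum_le_size => z; exact: sumind_le1.
Qed.
Ltac nodup := repeat constructor; simpl; intuition congruence.

Ltac neq := first [assumption | apply: not_eq_sym; assumption].

Lemma fin3 (al be ga : R) (P : list R) :
  al <> be -> al <> ga -> be <> ga -> size P = 5 ->
  4 <= cnt P al + cnt P be + cnt P ga ->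
  (cnt P al + cnt P be + cnt P ga = 5 /\
     Permutation (nseq (cnt P al) al ++ nseq (cnt P be) be ++ nseq (cnt P ga) ga) P)
  \/
  (cnt P al + cnt P be + cnt P ga = 4 /\ exists de, de <> al /\ de <> be /\ de <> ga /\
     Permutation (nseq (cnt P al) al ++ nseq (cnt P be) be ++ nseq (cnt P ga) ga ++ [:: de]) P).
Proof.
move=> Hab Hag Hbg Hs H4.
have Hba := not_eq_sym Hab. have Hga := not_eq_sym Hag. have Hgb := not_eq_sym Hbg.
pose wA y := ind al y + ind be y + ind ga y.
have HwA : forall y, y <> al -> y <> be -> y <> ga -> wA y = 0.
  by move=> y H1 H2 H3; rewrite /wA !ind_neq.
have HwA1 : forall y, y = al \/ y = be \/ y = ga -> wA y = 1.
  move=> y [->|[->|->]]; rewrite /wA !ind_eq ?ind_neq //; by auto.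
have HA : wsum wA P = cnt P al + cnt P be + cnt P ga.
  by rewrite /wA !wsum_add.
have Hle : forall y, y <> al -> y <> be -> y <> ga ->
    cnt P al + cnt P be + cnt P ga + cnt P y <= 5.
  move=> y H1 H2 H3; rewrite -Hs -HA /cnt -wsum_add; apply: wsum_le_size => z.
  case: (Req_dec_T z y) => [->|Hzy]; first by rewrite HwA // ind_eq.
  rewrite (ind_neq Hzy) addn0 /wA.
  case: (Req_dec_T z al) => [->|Hza]; first by rewrite ind_eq !ind_neq //; auto.
  case: (Req_dec_T z be) => [->|Hzb]; first by rewrite ind_eq !ind_neq //; auto.
  rewrite (ind_neq Hza) (ind_neq Hzb); exact: ind_le1.
have Hle5 : cnt P al + cnt P be + cnt P ga <= 5.
  rewrite -Hs -HA; apply: wsum_le_size => z.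
  case: (Req_dec_T z al) => [->|Hza]; first by rewrite /wA ind_eq !ind_neq //; auto.
  case: (Req_dec_T z be) => [->|Hzb]; first by rewrite /wA ind_eq !ind_neq //; auto.
  case: (Req_dec_T z ga) => [->|Hzg]; first by rewrite /wA ind_eq !ind_neq //; auto.
  by rewrite HwA.
have Ct : forall y n1 n2 n3 rest, cnt (nseq n1 al ++ nseq n2 be ++ nseq n3 ga ++ rest) y =
   n1 * ind y al + n2 * ind y be + n3 * ind y ga + cnt rest y.
  by move=> y n1 n2 n3 rest; rewrite /cnt !wsum_app !wsum_nseq; lia.
have Hcases : forall y, y = al \/ y = be \/ y = ga \/ (y <> al /\ y <> be /\ y <> ga).
  move=> y; case: (Req_dec_T y al) => H1; [by left|]; case: (Req_dec_T y be) => H2; [by right; left|].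
  case: (Req_dec_T y ga) => H3; [by right; right; left|]; by right; right; right.
case: (ltngtP (cnt P al + cnt P be + cnt P ga) 4) => Hc; first lia.
- left; split; first lia.
  have Ht : forall y, cnt (nseq (cnt P al) al ++ nseq (cnt P be) be ++ nseq (cnt P ga) ga) y =
      cnt (nseq (cnt P al) al ++ nseq (cnt P be) be ++ nseq (cnt P ga) ga ++ [::]) y.
    by move=> y; rewrite cats0.
  apply: perm_cnt => y; rewrite Ht Ct.
  case: (Hcases y) => [->|[->|[->|[H1 [H2 H3]]]]].
  + rewrite ind_eq !ind_neq; try neq. rewrite cnt_nil; lia.
  + rewrite ind_eq !ind_neq; try neq. rewrite cnt_nil; lia.
  + rewrite ind_eq !ind_neq; try neq. rewrite cnt_nil; lia.
  + rewrite !ind_neq; try neq. have := Hle y H1 H2 H3; rewrite cnt_nil; lia.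
- right; split; first by [].
  have [de [HdP HdA]] : exists de, List.In de P /\ wA de = 0.
    apply: NNPP => Hn.
    have : wsum wA P = size P.
      apply: wsum_all1 => y Hy.
      have : wA y <= 1.
        case: (Hcases y) => [->|[->|[->|[H1 [H2 H3]]]]]; try by rewrite HwA1; auto.
        by rewrite HwA.
      have : wA y <> 0 by move=> H0; apply: Hn; exists y.
      lia.
    lia.
  have Hd : de <> al /\ de <> be /\ de <> ga.
    split; [|split] => H; rewrite (HwA1 de) in HdA => //; auto.
  case: Hd => Hda [Hdb Hdg].
  exists de; split => //; split => //; split => //.
  apply: perm_cnt => y; rewrite Ct.
  have Hd1 := cnt_In HdP. have := Hle de Hda Hdb Hdg.
  case: (Hcases y) => [->|[->|[->|[H1 [H2 H3]]]]].
  + rewrite ind_eq !ind_neq; try neq. rewrite cnt_single ind_neq //; lia.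
  + rewrite ind_eq !ind_neq; try neq. rewrite cnt_single ind_neq //; lia.
  + rewrite ind_eq !ind_neq; try neq. rewrite cnt_single ind_neq //; lia.
  + rewrite !ind_neq; try neq. rewrite cnt_single.
    case: (Req_dec_T y de) => [->|Hyd].
    * rewrite ind_eq. move=> Hl; have : cnt P de = 1 by lia. lia.
    * rewrite (ind_neq (not_eq_sym Hyd)) => _.
      have : sumcnt [:: al; be; ga; de; y] P <= size P by apply: sumcnt_le; nodup.
      rewrite /=; lia.
Qed.

Lemma fin1 (al : R) (P : list R) :
  size P = 5 -> cnt P al = 4 ->
  exists be, be <> al /\ Permutation [:: al; al; al; al; be] P.
Proof.
move=> Hs Hc.
have [de [HdP Hda]] : exists de, List.In de P /\ de <> al.
  apply: NNPP => Hn.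
  have : wsum (ind al) P = size P.
    apply: wsum_all1 => y Hy; case: (Req_dec_T y al) => [->|H]; first exact: ind_eq.
    exfalso; apply: Hn; by exists y.
  rewrite -/(cnt P al); lia.
exists de; split => //; apply: perm_cnt => y.
have Hd1 := cnt_In HdP.
have : sumcnt [:: al; de] P <= size P by apply: sumcnt_le; nodup.
rewrite /= => Hle.
rewrite /cnt !wsum_cons wsum_nil -!/(cnt P _).
case: (Req_dec_T y al) => [->|Hya].
  rewrite ind_eq (ind_neq Hda); lia.
case: (Req_dec_T y de) => [->|Hyd].
  rewrite ind_eq (ind_neq (not_eq_sym Hda)); lia.
rewrite !ind_neq; try neq.
have : sumcnt [:: al; de; y] P <= size P by apply: sumcnt_le; nodup.
rewrite /=; lia.
Qed.

Lemma cnt_all (P : list R) al : cnt P al = size P -> forall y, List.In y P -> y = al.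
Proof.
elim: P => [|z P IH] //=; rewrite /cnt wsum_cons -/(cnt P al) => H y [<-|Hy].
- have := @wsum_le_size (ind al) P (ind_le1 al); rewrite -/(cnt P al).
  move=> Hle; case: (Req_dec_T z al) => // Hz; rewrite (ind_neq Hz) in H; lia.
- apply: IH => //.
  have := @wsum_le_size (ind al) P (ind_le1 al); rewrite -/(cnt P al).
  have := ind_le1 al z; lia.
Qed.

Definition rsum (L : list R) : R := fold_right Rplus R0 L.
Lemma rsum_perm L M : Permutation L M -> rsum L = rsum M.
Proof.
elim => //= [x l l' _ -> | x y l | l l' l'' _ -> _ ->] //; ring.
Qed.

Lemma p132 (a b c : R) : Permutation [:: a; b; c] [:: a; c; b].
Proof. apply: perm_skip; apply: perm_swap. Qed.
Lemma p213 (a b c : R) : Permutation [:: a; b; c] [:: b; a; c].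
Proof. apply: perm_swap. Qed.
Lemma p231 (a b c : R) : Permutation [:: a; b; c] [:: b; c; a].
Proof. eapply Permutation_trans; [apply: (p213 a b c)|]; apply: perm_skip; apply: perm_swap. Qed.
Lemma p312 (a b c : R) : Permutation [:: a; b; c] [:: c; a; b].
Proof. eapply Permutation_trans; [apply: (p132 a b c)|]; apply: perm_swap. Qed.
Lemma p321 (a b c : R) : Permutation [:: a; b; c] [:: c; b; a].
Proof. eapply Permutation_trans; [apply: (p312 a b c)|]; apply: perm_skip; apply: perm_swap. Qed.
Ltac perm3 := first [apply: Permutation_refl | apply: p132 | apply: p213 | apply: p231
  | apply: p312 | apply: p321].

Definition in3 (t a b c : R) := t = a \/ t = b \/ t = c.

Ltac splitall := repeat match goal with H : _ \/ _ |- _ => destruct H end.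

Lemma L1 a b c x y z : a <> b -> a <> c -> b <> c -> (a + b + c = 2 * PI)%Re ->
  in3 x a b c -> in3 y a b c -> in3 z a b c -> (x + y + z = 2 * PI)%Re ->
  Permutation [:: a; b; c] [:: x; y; z] \/ (y = x /\ z = x).
Proof.
rewrite /in3 => Hab Hac Hbc Hs Hx Hy Hz Hs2.
splitall; subst x y z;
 first [left; perm3 | right; split; reflexivity
       | exfalso; first [apply: Hab; lra | apply: Hac; lra | apply: Hbc; lra]].
Qed.

Lemma mem3_sub a b c p q r : a <> b -> a <> c -> b <> c ->
  in3 a p q r -> in3 b p q r -> in3 c p q r -> forall t, in3 t p q r -> in3 t a b c.
Proof.
rewrite /in3 => Hab Hac Hbc Ha Hb Hc t Ht.
splitall; subst; first [exfalso; congruence | auto].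
Qed.

Lemma pick_third X Y p q r : X <> Y -> in3 X p q r -> in3 Y p q r ->
  exists Z, forall t, in3 t p q r -> in3 t X Y Z.
Proof.
rewrite /in3 => HXY HX HY.
splitall; subst; first [exfalso; congruence
  | solve [exists p; move=> t Ht; splitall; subst; auto]
  | solve [exists q; move=> t Ht; splitall; subst; auto]
  | solve [exists r; move=> t Ht; splitall; subst; auto]].
Qed.

Lemma L2 X Y Z x y z : X <> Y -> (X + X + Y = 2 * PI)%Re ->
  in3 x X Y Z -> in3 y X Y Z -> in3 z X Y Z -> (x + y + z = 2 * PI)%Re ->
  (x = y \/ y = z \/ x = z) ->
  Permutation [:: X; X; Y] [:: x; y; z] \/ Permutation [:: Y; Y; Z] [:: x; y; z] \/
  Permutation [:: Z; Z; X] [:: x; y; z] \/ Permutation [:: Z; Z; Z] [:: x; y; z].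
Proof.
rewrite /in3 => HXY Hs Hx Hy Hz Hs2 Hr.
case: (Req_dec_T Z X) => [HZX|HZX]; [subst Z|case: (Req_dec_T Z Y) => [HZY|HZY]; [subst Z|]];
splitall; subst x y z;
 first [left; perm3 | right; left; perm3 | right; right; left; perm3 | right; right; right; perm3
       | exfalso; congruence
       | exfalso; first [apply: HXY; lra | apply: HZX; lra | apply: HZY; lra]].
Qed.

Definition Concl (types : list (list R) -> Prop) (tile : list R -> Prop) : Prop :=
  exists al be ga de : R,
    (NoDup [:: al; be] /\ types [:: [:: al; al; al]] /\
       tile [:: al; al; al; al; be])
    \/
    (NoDup [:: al; be] /\ types [:: [:: al; be; be]] /\
       (tile [:: al; al; be; be; be] \/
        tile [:: al; al; al; be; be] \/
        (NoDup [:: al; be; ga] /\ tile [:: al; al; be; be; ga])))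
    \/
    (NoDup [:: al; be; ga] /\
       types [:: [:: al; be; ga]; [:: al; al; al]] /\
       (tile [:: al; al; al; be; ga] \/
        tile [:: al; al; be; be; ga] \/
        (NoDup [:: al; be; ga; de] /\ tile [:: al; al; be; ga; de])))
    \/
    (NoDup [:: al; be; ga] /\
       types [:: [:: al; be; be]; [:: al; al; ga]] /\
       (tile [:: al; al; al; be; ga] \/
        tile [:: al; al; be; be; ga] \/
        tile [:: al; al; be; ga; ga] \/
        (NoDup [:: al; be; ga; de] /\ tile [:: al; al; be; ga; de])))
    \/
    (NoDup [:: al; be; ga] /\
       types [:: [:: al; be; be]; [:: ga; ga; ga]] /\
       (tile [:: al; al; be; be; ga] \/
        tile [:: al; al; be; ga; ga] \/
        tile [:: al; be; be; be; ga] \/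
        tile [:: al; be; be; ga; ga] \/
        tile [:: al; be; ga; ga; ga] \/
        (NoDup [:: al; be; ga; de] /\
           (tile [:: al; be; be; ga; de] \/
            tile [:: al; be; ga; ga; de])))).

Lemma Concl_mono (t1 t2 : list (list R) -> Prop) (l1 l2 : list R -> Prop) :
  (forall S, t1 S -> t2 S) -> (forall L, l1 L -> l2 L) -> Concl t1 l1 -> Concl t2 l2.
Proof.
move=> Ht Hl [al [be [ga [de H]]]]; exists al, be, ga, de.
intuition auto.
Qed.

Ltac enum3 :=
  let na := fresh "na" in let nb := fresh "nb" in let nc := fresh "nc" in
  move=> na nb nc;
  case: na => [|[|[|[|na]]]]; case: nb => [|[|[|[|nb]]]]; case: nc => [|[|[|[|nc]]]] => //=;
  move=> Hsum Hp H1 H2 H3; try (exfalso; lia).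

Lemma tiles3 al be ga (P : list R) : al <> be -> al <> ga -> be <> ga -> size P = 5 ->
  2 <= cnt P al -> 1 <= cnt P be -> 1 <= cnt P ga -> 4 <= cnt P al + cnt P be + cnt P ga ->
  (Permutation [:: al; al; al; be; ga] P \/ Permutation [:: al; al; be; be; ga] P \/
     (exists de, NoDup [:: al; be; ga; de] /\ Permutation [:: al; al; be; ga; de] P)) \/
  (Permutation [:: al; al; al; ga; be] P \/ Permutation [:: al; al; ga; ga; be] P \/
     (exists de, NoDup [:: al; ga; be; de] /\ Permutation [:: al; al; ga; be; de] P)).
Proof.
move=> Hab Hag Hbg Hs Ha Hb Hc H4.
case: (fin3 Hab Hag Hbg Hs H4) => [[Hs5 Hp]|[Hs4 [de [Hda [Hdb [Hdg Hp]]]]]].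
- move: Hs5 Hp Ha Hb Hc; move: (cnt P al) (cnt P be) (cnt P ga); enum3;
  first [left; left; exact: Hp | left; right; left; exact: Hp
        | right; right; left;
          eapply Permutation_trans; [|exact: Hp]; do 2 apply: perm_skip; apply: p312].
- move: Hs4 Hp Ha Hb Hc; move: (cnt P al) (cnt P be) (cnt P ga); enum3.
  left; right; right; exists de; split => //; nodup.
Qed.

Lemma tiles4 al be ga (P : list R) : al <> be -> al <> ga -> be <> ga -> size P = 5 ->
  2 <= cnt P al -> 1 <= cnt P be -> 1 <= cnt P ga -> 4 <= cnt P al + cnt P be + cnt P ga ->
  Permutation [:: al; al; al; be; ga] P \/ Permutation [:: al; al; be; be; ga] P \/
  Permutation [:: al; al; be; ga; ga] P \/
     (exists de, NoDup [:: al; be; ga; de] /\ Permutation [:: al; al; be; ga; de] P).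
Proof.
move=> Hab Hag Hbg Hs Ha Hb Hc H4.
case: (fin3 Hab Hag Hbg Hs H4) => [[Hs5 Hp]|[Hs4 [de [Hda [Hdb [Hdg Hp]]]]]].
- move: Hs5 Hp Ha Hb Hc; move: (cnt P al) (cnt P be) (cnt P ga); enum3;
  first [left; exact: Hp | right; left; exact: Hp | right; right; left; exact: Hp].
- move: Hs4 Hp Ha Hb Hc; move: (cnt P al) (cnt P be) (cnt P ga); enum3.
  right; right; right; exists de; split => //; nodup.
Qed.

Lemma tiles5 al be ga (P : list R) : al <> be -> al <> ga -> be <> ga -> size P = 5 ->
  1 <= cnt P al -> 1 <= cnt P be -> 1 <= cnt P ga -> 4 <= cnt P al + cnt P be + cnt P ga ->
  ~ (cnt P be = 1 /\ cnt P ga = 1) ->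
       (Permutation [:: al; al; be; be; ga] P \/
        Permutation [:: al; al; be; ga; ga] P \/
        Permutation [:: al; be; be; be; ga] P \/
        Permutation [:: al; be; be; ga; ga] P \/
        Permutation [:: al; be; ga; ga; ga] P \/
        (exists de, NoDup [:: al; be; ga; de] /\
           (Permutation [:: al; be; be; ga; de] P \/
            Permutation [:: al; be; ga; ga; de] P))).
Proof.
move=> Hab Hag Hbg Hs Ha Hb Hc H4 Hn.
case: (fin3 Hab Hag Hbg Hs H4) => [[Hs5 Hp]|[Hs4 [de [Hda [Hdb [Hdg Hp]]]]]].
- move: Hs5 Hp Ha Hb Hc Hn; move: (cnt P al) (cnt P be) (cnt P ga); enum3; move=> Hn;
  try (exfalso; apply: Hn; split; reflexivity);
  first [left; exact: Hp | right; left; exact: Hp | do 2 right; left; exact: Hp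
        | do 3 right; left; exact: Hp | do 4 right; left; exact: Hp].
- move: Hs4 Hp Ha Hb Hc Hn; move: (cnt P al) (cnt P be) (cnt P ga); enum3; move=> Hn;
  try (exfalso; apply: Hn; split; reflexivity);
  do 5 right; exists de; (split; [nodup|]); first [left; exact: Hp | right; exact: Hp].
Qed.

Lemma tiles2 al be (P : list R) : al <> be -> size P = 5 ->
  2 <= cnt P al -> 3 <= cnt P be -> Permutation [:: al; al; be; be; be] P.
Proof.
move=> Hab Hs Ha Hb.
have : sumcnt [:: al; be] P <= size P by apply: sumcnt_le; nodup.
rewrite /= => Hle.
apply: perm_cnt => y.
rewrite /cnt !wsum_cons wsum_nil -!/(cnt P _).
case: (Req_dec_T y al) => [->|Hya].
  rewrite ind_eq (ind_neq (not_eq_sym Hab)); lia.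
case: (Req_dec_T y be) => [->|Hyb].
  rewrite ind_eq (ind_neq Hab); lia.
rewrite !ind_neq; try neq.
have : sumcnt [:: al; be; y] P <= size P by apply: sumcnt_le; nodup.
rewrite /=; lia.
Qed.

Lemma wsum3 a b c L : wsum (fun y => ind a y + ind b y + ind c y) L = cnt L a + cnt L b + cnt L c.
Proof. elim: L => [|z L IH] //=; rewrite /cnt !wsum_cons -!/(cnt L _) IH; lia. Qed.
Lemma wsum32 a b L : wsum (fun y => 3 * ind a y + 2 * ind b y) L = 3 * cnt L a + 2 * cnt L b.
Proof. elim: L => [|z L IH] //=; rewrite /cnt !wsum_cons -!/(cnt L _) IH; lia. Qed.

Ltac wcomp := rewrite /wsum /=; rewrite ?ind_eq; rewrite ?ind_neq; try neq; try lia.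

Section PureMain.
Variables (Tr : R -> R -> R -> Prop) (P : list R) (p q r : R).
Hypothesis Hsum : forall x y z, Tr x y z -> (x + y + z = 2 * PI)%Re.
Hypothesis Hval : forall x y z, Tr x y z -> in3 x p q r /\ in3 y p q r /\ in3 z p q r.
Hypothesis Hex : exists x y z, Tr x y z.
Hypothesis Hkey : forall w K, 0 < K ->
  (forall x y z, Tr x y z -> K <= wsum w [:: x; y; z]) -> K < wsum w P.
Hypothesis HIn : forall x y z, Tr x y z -> List.In x P /\ List.In y P /\ List.In z P.
Hypothesis Hsize : size P = 5.
Hypothesis H12 : (forall y, List.In y P -> y = (2 * PI / 3)%Re) -> False.

Definition types (S : list (list R)) : Prop :=
  (forall x y z, Tr x y z -> exists t, List.In t S /\ Permutation t [:: x; y; z]) /\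
  (forall t, List.In t S -> exists x y z, Tr x y z /\ Permutation t [:: x; y; z]).
Definition tile (L : list R) : Prop := Permutation L P.

Lemma keyS S w K : 0 < K ->
  (forall x y z, Tr x y z -> exists t, List.In t S /\ Permutation t [:: x; y; z]) ->
  (forall t, List.In t S -> K <= wsum w t) -> K < wsum w P.
Proof.
move=> K0 Hc Ht; apply: Hkey => // x y z Hxyz.
case: (Hc _ _ _ Hxyz) => t [Hin Hp]; rewrite -(wsum_perm w Hp); exact: Ht.
Qed.

Lemma In_perm3 a b c x y z v : Tr x y z -> Permutation [:: a; b; c] [:: x; y; z] ->
  in3 v a b c -> List.In v P.
Proof.
move=> Ht Hp Hv; have [Hx [Hy Hz]] := HIn Ht.
have : List.In v [:: x; y; z].
  apply: (Permutation_in _ Hp); case: Hv => [->|[->|->]]; simpl; auto.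
by move=> /= [<-|[<-|[<-|[]]]].
Qed.

Lemma val_perm3 a b c x y z v : Tr x y z -> Permutation [:: a; b; c] [:: x; y; z] ->
  in3 v a b c -> in3 v p q r.
Proof.
move=> Ht Hp Hv; have [Hx [Hy Hz]] := Hval Ht.
have : List.In v [:: x; y; z].
  apply: (Permutation_in _ Hp); case: Hv => [->|[->|->]]; simpl; auto.
by move=> /= [<-|[<-|[<-|[]]]].
Qed.

Lemma sum_perm3 a b c x y z : Tr x y z -> Permutation [:: a; b; c] [:: x; y; z] ->
  (a + b + c = 2 * PI)%Re.
Proof.
move=> Ht Hp; have := Hsum Ht; have := rsum_perm Hp; rewrite /rsum /=; lra.
Qed.

End PureMain.

Section Main.
Variables (Tr : R -> R -> R -> Prop) (P : list R) (p q r : R).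
Hypothesis Hsum : forall x y z, Tr x y z -> (x + y + z = 2 * PI)%Re.
Hypothesis Hval : forall x y z, Tr x y z -> in3 x p q r /\ in3 y p q r /\ in3 z p q r.
Hypothesis Hex : exists x y z, Tr x y z.
Hypothesis Hkey : forall w K, 0 < K ->
  (forall x y z, Tr x y z -> K <= wsum w [:: x; y; z]) -> K < wsum w P.
Hypothesis HIn : forall x y z, Tr x y z -> List.In x P /\ List.In y P /\ List.In z P.
Hypothesis Hsize : size P = 5.
Hypothesis H12 : (forall y, List.In y P -> y = (2 * PI / 3)%Re) -> False.

Let keyS := keyS Hkey.
Let In_perm3 := In_perm3 HIn.
Let sum_perm3 := sum_perm3 Hsum.
Let val_perm3 := val_perm3 Hval.

Lemma caseA a b c : Tr a b c -> a <> b -> a <> c -> b <> c -> Concl (types Tr) (tile P).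
Proof.
move=> Ht Hab Hac Hbc.
have Habc := Hsum Ht.
have [Ha [Hb Hc]] := Hval Ht.
have Hsub := mem3_sub Hab Hac Hbc Ha Hb Hc.
have Hall : forall x y z, Tr x y z -> Permutation [:: a; b; c] [:: x; y; z] \/ (y = x /\ z = x).
  move=> x y z Hxyz; have [Hx [Hy Hz]] := Hval Hxyz.
  apply: L1 => //; [exact: Hsub Hx | exact: Hsub Hy | exact: Hsub Hz | exact: Hsum Hxyz].
case: (classic (exists v, Tr v v v)) => [[v Hv]|Hnc].
- have Hv3 : (v + v + v = 2 * PI)%Re := Hsum Hv.
  have Hvin : in3 v a b c by have [Hx _] := Hval Hv; exact: Hsub Hx.
  have [al [be [ga [Hp [Hav [Habd [Hagd Hbgd]]]]]]] : exists al be ga,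
      Permutation [:: al; be; ga] [:: a; b; c] /\ al = v /\ al <> be /\ al <> ga /\ be <> ga.
    case: Hvin => [->|[->|->]].
    + exists a, b, c; split; [perm3|]; auto.
    + exists b, a, c; split; [perm3|]; split; auto.
    + exists c, a, b; split; [perm3|]; split; auto.
  subst v.
  have Hs3 : (al + be + ga = 2 * PI)%Re := sum_perm3 Ht Hp.
  have Hcov : forall x y z, Tr x y z -> exists t,
      List.In t [:: [:: al; be; ga]; [:: al; al; al]] /\ Permutation t [:: x; y; z].
    move=> x y z Hxyz; case: (Hall _ _ _ Hxyz) => [Hp2|[Ey Ez]].
    + exists [:: al; be; ga]; split; [by left|exact: Permutation_trans Hp Hp2].
    + subst y z; exists [:: al; al; al]; split; [by right; left|].
      have Hx3 := Hsum Hxyz.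
      have [Hx _] := Hval Hxyz.
      have Hx' : in3 x al be ga.
        have : List.In x [:: al; be; ga].
          apply: (Permutation_in _ (Permutation_sym Hp)).
          case: (Hsub _ Hx) => [->|[->|->]]; simpl; auto.
        by move=> /= [<-|[<-|[<-|[]]]]; rewrite /in3; auto.
      case: Hx' => [Ex|[Ex|Ex]]; rewrite Ex in Hx3 *; first exact: Permutation_refl.
      * exfalso; apply: Habd; lra.
      * exfalso; apply: Hagd; lra.
  have Htyp : types Tr [:: [:: al; be; ga]; [:: al; al; al]].
    split; first exact: Hcov.
    move=> t /= [<-|[<-|[]]]; [exists a, b, c | exists al, al, al]; split => //.
  have Hca : 1 < cnt P al.
    apply: (keyS _ Hcov) => // t /= [<-|[<-|[]]]; wcomp.
  have Hcb : 1 <= cnt P be by apply: cnt_In; apply: (In_perm3 Ht Hp); rewrite /in3; auto.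
  have Hcg : 1 <= cnt P ga by apply: cnt_In; apply: (In_perm3 Ht Hp); rewrite /in3; auto.
  have HcA : 3 < cnt P al + cnt P be + cnt P ga.
    rewrite -wsum3; apply: (keyS _ Hcov) => // t /= [<-|[<-|[]]]; wcomp.
  case: (tiles3 Habd Hagd Hbgd Hsize Hca Hcb Hcg HcA) => [H|H].
  + case: H => [H|[H|[de [Hnd H]]]];
    [exists al, be, ga, al | exists al, be, ga, al | exists al, be, ga, de];
    do 2 right; left; (split; [nodup|]); split => //; auto.
  + have Htyp' : types Tr [:: [:: al; ga; be]; [:: al; al; al]].
      case: Htyp => [H1 H2]; split.
      * move=> x y z Hxyz; case: (H1 _ _ _ Hxyz) => t [/= [<-|[<-|[]]] Hpt].
        -- exists [:: al; ga; be]; split; [by left|]; exact: Permutation_trans (p132 _ _ _) Hpt.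
        -- exists [:: al; al; al]; split; [by right; left|exact: Hpt].
      * move=> t /= [<-|[<-|[]]].
        -- case: (H2 [:: al; be; ga]) => [|x [y [z [Hxyz Hpt]]]]; first by left.
           exists x, y, z; split => //; exact: Permutation_trans (p132 _ _ _) Hpt.
        -- apply: H2; by right; left.
    case: H => [H|[H|[de [Hnd H]]]];
    [exists al, ga, be, al | exists al, ga, be, al | exists al, ga, be, de];
    do 2 right; left; (split; [nodup|]); split => //; auto.
-
  have Hcov : forall x y z, Tr x y z -> exists t,
      List.In t [:: [:: a; b; c]] /\ Permutation t [:: x; y; z].
    move=> x y z Hxyz; case: (Hall _ _ _ Hxyz) => [Hp2|[Ey Ez]].
    + exists [:: a; b; c]; split; [by left|exact: Hp2].
    + subst y z; exfalso; apply: Hnc; by exists x.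
  have H1 : 1 < cnt P a by apply: (keyS _ Hcov) => // t /= [<-|[]]; wcomp.
  have H2 : 1 < cnt P b by apply: (keyS _ Hcov) => // t /= [<-|[]]; wcomp.
  have H3 : 1 < cnt P c by apply: (keyS _ Hcov) => // t /= [<-|[]]; wcomp.
  have : sumcnt [:: a; b; c] P <= size P by apply: sumcnt_le; nodup.
  rewrite /= Hsize; lia.
Qed.


Lemma p231t (a b c : R) l : Permutation [:: b; c; a] l -> Permutation [:: a; b; c] l.
Proof. move=> H; eapply Permutation_trans; [apply: p231|exact: H]. Qed.

Lemma caseB2 X Y x y z : Tr x y z -> Permutation [:: X; X; Y] [:: x; y; z] -> X <> Y ->
  (forall x y z, Tr x y z -> x = y \/ y = z \/ x = z) ->
  Concl (types Tr) (tile P).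
Proof.
move=> Ht HpXY HXY Hrep.
have HsXY := sum_perm3 Ht HpXY.
have HXin : in3 X p q r by apply: (val_perm3 Ht HpXY); rewrite /in3; auto.
have HYin : in3 Y p q r by apply: (val_perm3 Ht HpXY); rewrite /in3; auto.
have [Z HZ] := pick_third HXY HXin HYin.
have Hcl : forall x y z, Tr x y z ->
  Permutation [:: X; X; Y] [:: x; y; z] \/ Permutation [:: Y; Y; Z] [:: x; y; z] \/
  Permutation [:: Z; Z; X] [:: x; y; z] \/ Permutation [:: Z; Z; Z] [:: x; y; z].
  move=> x' y' z' H'; have [Hx [Hy Hz]] := Hval H'.
  apply: L2 => //; [exact: HZ Hx | exact: HZ Hy | exact: HZ Hz | exact: Hsum H' | exact: Hrep H'].
have HXP : 1 <= cnt P X by apply: cnt_In; apply: (In_perm3 Ht HpXY); rewrite /in3; auto.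
have HYP : 1 <= cnt P Y by apply: cnt_In; apply: (In_perm3 Ht HpXY); rewrite /in3; auto.
case: (classic (exists x y z, Tr x y z /\ Permutation [:: Y; Y; Z] [:: x; y; z])) =>
  [[x1 [y1 [z1 [Ht1 Hp1]]]]|nF1].
  (* S = {Y X^2, Y^2 Z} : case 4 with al = Y, be = X, ga = Z *)
  have Hs1 := sum_perm3 Ht1 Hp1.
  have HZX : Z <> X by move=> E; rewrite E in Hs1; apply: HXY; lra.
  have HZY : Z <> Y by move=> E; rewrite E in Hs1; apply: HXY; lra.
  have Hcov : forall x y z, Tr x y z -> exists t,
      List.In t [:: [:: Y; X; X]; [:: Y; Y; Z]] /\ Permutation t [:: x; y; z].
    move=> x' y' z' H'; case: (Hcl _ _ _ H') => [H|[H|[H|H]]].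
    + exists [:: Y; X; X]; split; [by left|apply: p231t; exact: H].
    + exists [:: Y; Y; Z]; split; [by right; left|exact: H].
    + have := sum_perm3 H' H; move=> Hs2; exfalso; apply: HXY; lra.
    + have := sum_perm3 H' H; move=> Hs2; exfalso; apply: HZY; lra.
  have Htyp : types Tr [:: [:: Y; X; X]; [:: Y; Y; Z]].
    split; first exact: Hcov.
    move=> t /= [<-|[<-|[]]]; [exists x, y, z | exists x1, y1, z1]; split => //.
    apply: p231t; exact: HpXY.
  have HZP : 1 <= cnt P Z by apply: cnt_In; apply: (In_perm3 Ht1 Hp1); rewrite /in3; auto.
  have HcY : 1 < cnt P Y by apply: (keyS _ Hcov) => // t /= [<-|[<-|[]]]; wcomp.
  have HcA : 3 < cnt P Y + cnt P X + cnt P Z.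
    rewrite -wsum3; apply: (keyS _ Hcov) => // t /= [<-|[<-|[]]]; wcomp.
  have HYX := not_eq_sym HXY.
  case: (tiles4 HYX (not_eq_sym HZY) (not_eq_sym HZX) Hsize HcY HXP HZP HcA) =>
    [H|[H|[H|[de [Hnd H]]]]];
  [exists Y, X, Z, Y | exists Y, X, Z, Y | exists Y, X, Z, Y | exists Y, X, Z, de];
  do 3 right; left; (split; [nodup|]); split => //; auto.
case: (classic (exists x y z, Tr x y z /\ Permutation [:: Z; Z; X] [:: x; y; z])) =>
  [[x1 [y1 [z1 [Ht1 Hp1]]]]|nF2].
  (* S = {X Z^2, X^2 Y} : case 4 with al = X, be = Z, ga = Y *)
  have Hs1 := sum_perm3 Ht1 Hp1.
  have HZX : Z <> X by move=> E; rewrite E in Hs1; apply: HXY; lra.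
  have HZY : Z <> Y by move=> E; rewrite E in Hs1; apply: HXY; lra.
  have Hcov : forall x y z, Tr x y z -> exists t,
      List.In t [:: [:: X; Z; Z]; [:: X; X; Y]] /\ Permutation t [:: x; y; z].
    move=> x' y' z' H'; case: (Hcl _ _ _ H') => [H|[H|[H|H]]].
    + exists [:: X; X; Y]; split; [by right; left|exact: H].
    + exfalso; apply: nF1; by exists x', y', z'.
    + exists [:: X; Z; Z]; split; [by left|apply: p231t; exact: H].
    + have := sum_perm3 H' H; move=> Hs2; exfalso; apply: HZX; lra.
  have Htyp : types Tr [:: [:: X; Z; Z]; [:: X; X; Y]].
    split; first exact: Hcov.
    move=> t /= [<-|[<-|[]]]; [exists x1, y1, z1 | exists x, y, z]; split => //.
    apply: p231t; exact: Hp1.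
  have HZP : 1 <= cnt P Z by apply: cnt_In; apply: (In_perm3 Ht1 Hp1); rewrite /in3; auto.
  have HcX : 1 < cnt P X by apply: (keyS _ Hcov) => // t /= [<-|[<-|[]]]; wcomp.
  have HcA : 3 < cnt P X + cnt P Z + cnt P Y.
    rewrite -wsum3; apply: (keyS _ Hcov) => // t /= [<-|[<-|[]]]; wcomp.
  case: (tiles4 (not_eq_sym HZX) HXY HZY Hsize HcX HZP HYP HcA) =>
    [H|[H|[H|[de [Hnd H]]]]];
  [exists X, Z, Y, X | exists X, Z, Y, X | exists X, Z, Y, X | exists X, Z, Y, de];
  do 3 right; left; (split; [nodup|]); split => //; auto.
case: (classic (exists x y z, Tr x y z /\ Permutation [:: Z; Z; Z] [:: x; y; z])) =>
  [[x1 [y1 [z1 [Ht1 Hp1]]]]|nF3].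
  (* S = {Y X^2, Z^3} : case 5 with al = Y, be = X, ga = Z *)
  have Hs1 := sum_perm3 Ht1 Hp1.
  have HZX : Z <> X by move=> E; rewrite E in Hs1; apply: HXY; lra.
  have HZY : Z <> Y by move=> E; rewrite E in Hs1; apply: HXY; lra.
  have Hcov : forall x y z, Tr x y z -> exists t,
      List.In t [:: [:: Y; X; X]; [:: Z; Z; Z]] /\ Permutation t [:: x; y; z].
    move=> x' y' z' H'; case: (Hcl _ _ _ H') => [H|[H|[H|H]]].
    + exists [:: Y; X; X]; split; [by left|apply: p231t; exact: H].
    + exfalso; apply: nF1; by exists x', y', z'.
    + exfalso; apply: nF2; by exists x', y', z'.
    + exists [:: Z; Z; Z]; split; [by right; left|exact: H].
  have Htyp : types Tr [:: [:: Y; X; X]; [:: Z; Z; Z]].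
    split; first exact: Hcov.
    move=> t /= [<-|[<-|[]]]; [exists x, y, z | exists x1, y1, z1]; split => //.
    apply: p231t; exact: HpXY.
  have HZP : 1 <= cnt P Z by apply: cnt_In; apply: (In_perm3 Ht1 Hp1); rewrite /in3; auto.
  have HcA : 3 < cnt P Y + cnt P X + cnt P Z.
    rewrite -wsum3; apply: (keyS _ Hcov) => // t /= [<-|[<-|[]]]; wcomp.
  have H6 : 6 < 3 * cnt P X + 2 * cnt P Z.
    rewrite -wsum32; apply: (keyS _ Hcov) => // t /= [<-|[<-|[]]]; wcomp.
  have Hn : ~ (cnt P X = 1 /\ cnt P Z = 1) by move=> [E1 E2]; lia.
  have HYX := not_eq_sym HXY.
  have [H|[H|[H|[H|[H|[de [Hnd H]]]]]]] :=
    tiles5 HYX (not_eq_sym HZY) (not_eq_sym HZX) Hsize HYP HXP HZP HcA Hn;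
  [exists Y, X, Z, Y | exists Y, X, Z, Y | exists Y, X, Z, Y | exists Y, X, Z, Y
   | exists Y, X, Z, Y | exists Y, X, Z, de];
  do 4 right; (split; [nodup|]); split => //; auto 7.
(* S = {Y X^2} : case 2 with al = Y, be = X *)
have Hcov : forall x y z, Tr x y z -> exists t,
    List.In t [:: [:: Y; X; X]] /\ Permutation t [:: x; y; z].
  move=> x' y' z' H'; case: (Hcl _ _ _ H') => [H|[H|[H|H]]].
  + exists [:: Y; X; X]; split; [by left|apply: p231t; exact: H].
  + exfalso; apply: nF1; by exists x', y', z'.
  + exfalso; apply: nF2; by exists x', y', z'.
  + exfalso; apply: nF3; by exists x', y', z'.
have Htyp : types Tr [:: [:: Y; X; X]].
  split; first exact: Hcov.
  move=> t /= [<-|[]]; exists x, y, z; split => //.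
  apply: p231t; exact: HpXY.
have HYX := not_eq_sym HXY.
have HcY : 1 < cnt P Y by apply: (keyS _ Hcov) => // t /= [<-|[]]; wcomp.
have HcX : 2 < cnt P X by apply: (keyS _ Hcov) => // t /= [<-|[]]; wcomp.
have H := tiles2 HYX Hsize HcY HcX.
exists Y, X, Y, Y; right; left; split; [nodup|]; split => //; by left.
Qed.


Theorem pure_main : Concl (types Tr) (tile P).
Proof.
case: (classic (exists a b c, Tr a b c /\ a <> b /\ a <> c /\ b <> c)) =>
  [[a [b [c [Ht [Hab [Hac Hbc]]]]]]|HnA].
  exact: (caseA Ht Hab Hac Hbc).
have Hrep : forall x y z, Tr x y z -> x = y \/ y = z \/ x = z.
  move=> x y z Hxyz; apply: NNPP => Hn; apply: HnA; exists x, y, z.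
  split => //; split; [|split] => E; apply: Hn; auto.
case: (classic (exists x y z, Tr x y z /\ ~ (y = x /\ z = x))) =>
  [[x [y [z [Hxyz Hnc]]]]|Hallc].
  case: (Hrep _ _ _ Hxyz) => [Exy|[Eyz|Exz]].
  - apply: (@caseB2 x z x y z) => //.
    + rewrite -Exy; exact: Permutation_refl.
    + move=> E; apply: Hnc; split; auto.
  - apply: (@caseB2 y x x y z) => //.
    + rewrite -Eyz; apply: p312.
    + move=> E; apply: Hnc; split; congruence.
  - apply: (@caseB2 x y x y z) => //.
    + rewrite -Exz; apply: p132.
    + move=> E; apply: Hnc; split; congruence.
have Hcube : forall x y z, Tr x y z -> y = x /\ z = x.
  move=> x y z Hxyz; apply: NNPP => Hn; apply: Hallc; by exists x, y, z.
have [x [y [z Hxyz]]] := Hex.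
have [Ey Ez] := Hcube _ _ _ Hxyz.
rewrite Ey Ez in Hxyz.
have Hx3 := Hsum Hxyz.
have Hcov : forall x' y' z', Tr x' y' z' -> exists t,
    List.In t [:: [:: x; x; x]] /\ Permutation t [:: x'; y'; z'].
  move=> x' y' z' H'; have [E1 E2] := Hcube _ _ _ H'; rewrite E1 E2 in H' *.
  have H3 := Hsum H'.
  have -> : x' = x by lra.
  exists [:: x; x; x]; split; [by left|exact: Permutation_refl].
have Htyp : types Tr [:: [:: x; x; x]].
  split; first exact: Hcov.
  move=> t /= [<-|[]]; exists x, x, x; split => //.
have Hc4 : 3 < cnt P x by apply: (keyS _ Hcov) => // t /= [<-|[]]; wcomp.
have Hc5 : cnt P x <= 5.
  have : sumcnt [:: x] P <= size P by apply: sumcnt_le; nodup.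
  rewrite /= Hsize; lia.
have Hc : cnt P x = 4.
  case: (ltngtP (cnt P x) 5) => H; try lia.
  exfalso; apply: H12 => y' Hy'.
  have -> := cnt_all (P := P) (al := x) ltac:(rewrite Hsize; lia) Hy'.
  lra.
have [be [Hbe Hp]] := fin1 Hsize Hc.
exists x, be, x, x; left; split; [nodup|]; split => //.
Qed.

End Main.

Lemma l3_pqr (l : list R) : length l <= 3 ->
  exists p q r, forall y, List.In y l -> in3 y p q r.
Proof.
rewrite /in3; case: l => [|p [|q [|r [|t l]]]] /= H.
- exists R0, R0, R0 => y [].
- exists p, p, p => y [<-|[]]; auto.
- exists p, q, q => y [<-|[<-|[]]]; auto.
- exists p, q, r => y [<-|[<-|[<-|[]]]]; auto.
- lia.
Qed.

Unset Implicit Arguments.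

Theorem proposition5 (D : finType) (s a : {perm D}) (ang : D -> R)
  (T : angle_congruent_pentagonal_tiling s a ang)
  (Hf : 12 < ntiles s a)
  (H3 : exists l : list R, length l <= 3 /\
          forall V x, deg3 s a V -> x \in V -> List.In (ang x) l) :
  exists al be ga de : R,
    (* S = {al^3} *)
    (NoDup [:: al; be] /\ deg3_vertex_types s a ang [:: [:: al; al; al]] /\
       tile_angles s a ang [:: al; al; al; al; be])
    \/
    (* S = {al be^2} *)
    (NoDup [:: al; be] /\ deg3_vertex_types s a ang [:: [:: al; be; be]] /\
       (tile_angles s a ang [:: al; al; be; be; be] \/
        tile_angles s a ang [:: al; al; al; be; be] \/
        (NoDup [:: al; be; ga] /\ tile_angles s a ang [:: al; al; be; be; ga])))
    \/
    (* S = {al be ga, al^3} *)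
    (NoDup [:: al; be; ga] /\
       deg3_vertex_types s a ang [:: [:: al; be; ga]; [:: al; al; al]] /\
       (tile_angles s a ang [:: al; al; al; be; ga] \/
        tile_angles s a ang [:: al; al; be; be; ga] \/
        (NoDup [:: al; be; ga; de] /\ tile_angles s a ang [:: al; al; be; ga; de])))
    \/
    (* S = {al be^2, al^2 ga} *)
    (NoDup [:: al; be; ga] /\
       deg3_vertex_types s a ang [:: [:: al; be; be]; [:: al; al; ga]] /\
       (tile_angles s a ang [:: al; al; al; be; ga] \/
        tile_angles s a ang [:: al; al; be; be; ga] \/
        tile_angles s a ang [:: al; al; be; ga; ga] \/
        (NoDup [:: al; be; ga; de] /\ tile_angles s a ang [:: al; al; be; ga; de])))
    \/
    (* S = {al be^2, ga^3} *)
    (NoDup [:: al; be; ga] /\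
       deg3_vertex_types s a ang [:: [:: al; be; be]; [:: ga; ga; ga]] /\
       (tile_angles s a ang [:: al; al; be; be; ga] \/
        tile_angles s a ang [:: al; al; be; ga; ga] \/
        tile_angles s a ang [:: al; be; be; be; ga] \/
        tile_angles s a ang [:: al; be; be; ga; ga] \/
        tile_angles s a ang [:: al; be; ga; ga; ga] \/
        (NoDup [:: al; be; ga; de] /\
           (tile_angles s a ang [:: al; be; be; ga; de] \/
            tile_angles s a ang [:: al; be; ga; ga; de])))).
Proof.
have [P HP] := angle_congruent T.
have [l [Hl Hlin]] := H3.
have [p [q [r Hpqr]]] := l3_pqr Hl.
pose Tr := fun x y z => exists V, deg3 s a V /\ angles ang V = [:: x; y; z].
have HTr : forall x y z, Tr x y z -> exists V x1 x2 x3, deg3 s a V /\ x1 \in V /\ x2 \in V /\ x3 \in V /\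
    x = ang x1 /\ y = ang x2 /\ z = ang x3 /\ angles ang V = [:: x; y; z].
  move=> x y z [V [HV HA]].
  have [x1 [x2 [x3 [_ [H1 [H2 [H3' [HA' _]]]]]]]] := deg3_triple T HV.
  rewrite HA' in HA; case: HA => E1 E2 E3.
  exists V, x1, x2, x3; do 7 (split => //); by rewrite -E1 -E2 -E3.
have Hsum : forall x y z, Tr x y z -> (x + y + z = 2 * PI)%Re.
  move=> x y z [V [HV HA]].
  have [x1 [x2 [x3 [_ [H1 [H2 [H3' [HA' Hs]]]]]]]] := deg3_triple T HV.
  rewrite HA' in HA; case: HA => <- <- <-; exact: Hs.
have Hval : forall x y z, Tr x y z -> in3 x p q r /\ in3 y p q r /\ in3 z p q r.
  move=> x y z Ht; have [V [x1 [x2 [x3 [HV [H1 [H2 [H3' [-> [-> [-> _]]]]]]]]]]] := HTr _ _ _ Ht.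
  split; [|split]; apply: Hpqr; apply: Hlin; eassumption.
have Hex : exists V, deg3 s a V.
  apply: NNPP => Hn.
  have Hb := v3_bound T.
  have : v3 s a = 0.
    rewrite /v3; apply: big1 => V HV; case: eqP => // E; exfalso; apply: Hn; exists V.
    by rewrite /deg3 HV E eqxx.
  lia.
have Hex' : exists x y z, Tr x y z.
  case: Hex => V HV; have [x1 [x2 [x3 [_ [_ [_ [_ [HA' _]]]]]]]] := deg3_triple T HV.
  exists (ang x1), (ang x2), (ang x3), V; split => //.
have Hkey : forall w K, 0 < K ->
    (forall x y z, Tr x y z -> K <= wsum w [:: x; y; z]) -> K < wsum w P.
  move=> w K K0 H; apply: (key_lemma T HP K0) => V HV.
  have [x1 [x2 [x3 [_ [_ [_ [_ [HA' _]]]]]]]] := deg3_triple T HV.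
  rewrite HA'; apply: H; exists V; split => //.
have HIn : forall x y z, Tr x y z -> List.In x P /\ List.In y P /\ List.In z P.
  move=> x y z Ht; have [V [x1 [x2 [x3 [HV [H1 [H2 [H3' [-> [-> [-> _]]]]]]]]]]] := HTr _ _ _ Ht.
  split; [|split]; exact: (In_P HP).
have Hsize : size P = 5.
  case: Hex => V HV; have [x1 _] := deg3_triple T HV.
  have HF : porbit (face_perm s a) x1 \in tiles s a by apply: imset_f.
  have := Permutation_length (HP _ HF).
  rewrite -!size_length /angles size_map -cardE (tiles_pentagons T HF); by [].
have H12 : (forall y, List.In y P -> y = (2 * PI / 3)%Re) -> False.
  move=> H; have := all_twothirds T (fun x => H _ (In_P HP x)).
  move=> E; rewrite E in Hf; by [].
have Hmain := pure_main Hsum Hval Hex' Hkey HIn Hsize H12.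
apply: (Concl_mono _ _ Hmain).
- move=> S [H1 H2]; split.
  + move=> V HV; have [x1 [x2 [x3 [_ [_ [_ [_ [HA' _]]]]]]]] := deg3_triple T HV.
    have [t [Hin Hp]] := H1 (ang x1) (ang x2) (ang x3) (ex_intro _ V (conj HV HA')).
    exists t; split => //; by rewrite HA'.
  + move=> t Ht; have [x [y [z [[V [HV HA]] Hp]]]] := H2 t Ht.
    exists V; split => //; by rewrite HA.
- move=> L HL F HF; exact: Permutation_trans HL (HP F HF).
Qed.
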